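(* Let $Q$ be a query decomposed into $k$ edge-disjoint TC-subqueries $Q^1,\dots,Q^k$ (in a prefix-connected order), and assume that an incoming edge matches each edge of $Q$ with probability $1/d$, where $d$ is the number of distinct edge labels in $Q$. Consider an incoming edge $\sigma$ that matches one or more edges of $Q$. Then the total expected number of join operations for inserting $\sigma$ (in the worst case where every join result is nonempty) is \[ N=\frac{1}{d}\left((|E(Q)|-1)+\frac{k}{2}(k-1)\right). \]
   Context: A query $Q$ has directed labelled edges $E(Q)$ and a strict partial order $\prec$ (timing order) on them. A TC-query (timing-connected query) is one whose edges can be ordered $\epsilon_1,\dots,\epsilon_m$ with every prefix inducing a weakly connected subquery and $\epsilon_j\prec\epsilon_{j+1}$ for all $j$ (its timing sequence). A TC decomposition of $Q$ is a set of pairwise edge-disjoint TC-subqueries $Q^1,\dots,Q^k$ whose union is $Q$, ordered so that each $Q^1\cup\dots\cup Q^i$ is weakly connected. Evaluation model (the joins being counted): for each $Q^i$, matches of each prefix $\{\epsilon_1,\dots,\epsilon_j\}$ of its timing sequence are stored; when an incoming edge matches $\epsilon_1$ of some $Q^i$ no join is performed, and when it matches $\epsilon_j$ with $j>1$ it is joined once with the stored matches of $\{\epsilon_1,\dots,\epsilon_{j-1}\}$. Matches of $Q^1\cup\dots\cup Q^i$ are also stored for each $i$; when new matches of $Q^1$ arise they are joined successively with the matches of $Q^2,\dots,Q^k$ ($k-1$ joins), and when new matches of $Q^i$ with $i>1$ arise they are joined with the stored matches of $Q^1\cup\dots\cup Q^{i-1}$ and then successively with $Q^{i+1},\dots,Q^k$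 ($k-i+1$ joins). Edge labels here combine the edge label and the labels of its endpoints. *)

(* Defs.v *)
From mathcomp Require Import all_boot all_order all_algebra.
Set Implicit Arguments. Unset Strict Implicit. Unset Printing Implicit Defensive.
Import GRing.Theory Num.Theory.

Section Query.
(* A query Q: vertex type V, edge set E(Q) (a finite type), endpoints,
   (combined) labels and a timing relation [prec]. *)
Variables (V E : finType) (L : eqType).
Variables (src tgt : E -> V) (lab : E -> L) (prec : rel E).

Definition strict_partial_order :=
  irreflexive prec /\ transitive prec.

Definition edge_adj (e f : E) : bool :=
  [|| src e == src f, src e == tgt f, tgt e == src f | tgt e == tgt f].

Definition weakly_connected (S : {set E}) : bool :=
  [forall e in S, forall f in S,
     connect [rel x y | [&& x \in S, y \in S & edge_adj x y]] e f].

(* s is the timing sequence of a TC-query (its edge set is [set x in s]) *)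
Definition tc_sequence (s : seq E) : bool :=
  [&& s != [::], uniq s,
      all (fun i => weakly_connected [set x in take i s]) (iota 1 (size s))
    & sorted prec s].

(* A TC decomposition, each TC-subquery Q^i given by its timing sequence;
   D = [:: Q^1; ...; Q^k]. *)
Definition tc_decomposition (D : seq (seq E)) : Prop :=
  [/\ all tc_sequence D,
      perm_eq (flatten D) (enum E)  (* pairwise edge-disjoint, union = Q *)
    & forall i, 0 < i <= size D ->
        weakly_connected [set x in flatten (take i D)]].

Definition num_labels : nat := size (undup (map lab (enum E))).

(* With Q^i (0-based index i0) containing e at 0-based position j:
   - one join inside Q^i if j > 0;
   - if e is the last edge of the timing sequence of Q^i, new matches of Q^i
     arise, giving k-1 joins if i0 = 0 (i = 1) and k-i+1 = k-i0 joins
     otherwise. *)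
Definition joins_of_edge (D : seq (seq E)) (e : E) : nat :=
  let k := size D in
  let i0 := find (fun s => e \in s) D in
  let s := nth [::] D i0 in
  (0 < index e s) +
  (if e == last e s then (if i0 == 0 then k.-1 else k - i0) else 0).

(* expected number of joins when each edge of Q is matched by the incoming
   edge with probability p e (linearity of expectation). *)
Definition expected_joins (p : E -> rat) (D : seq (seq E)) : rat :=
  \sum_(e : E) p e * (joins_of_edge D e)%:R.

End Query.

(* Main.v *)
Require Import Defs.
From mathcomp Require Import all_boot all_order all_algebra.
From mathcomp Require Import zify ring.
Import GRing.Theory Num.Theory.

Lemma find_block (E : eqType) (D : seq (seq E)) (i : nat) (e : E) :
  uniq (flatten D) -> i < size D -> e \in nth [::] D i ->
  find (fun s => e \in s) D = i.
Proof.
elim: D i => [|s D IH] [|i] //= Hu Hi He; first by rewrite He.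
move: Hu; rewrite cat_uniq => /and3P[_ Hd Hu'].
have eD : e \in flatten D.
  apply/flattenP; exists (nth [::] D i) => //; exact: mem_nth.
have -> : (e \in s) = false.
  apply/negbTE; apply: contra Hd => Hs; apply/hasP; by exists e.
by rewrite (IH i).
Qed.

Lemma sum_index (E : eqType) (s : seq E) : uniq s -> s != [::] ->
  \sum_(e <- s) (0 < index e s) = (size s).-1.
Proof.
case: s => [|x s] //= /andP[Hx _] _.
rewrite big_cons /= eqxx /= add0n -[in RHS](sum1_size s).
apply: eq_big_seq => e He /=.
by have -> : (x == e) = false by apply/negbTE; apply: contraNneq Hx => ->.
Qed.

Lemma sum_last (E : eqType) (s : seq E) (c : nat) : uniq s -> s != [::] ->
  \sum_(e <- s) (if e == last e s then c else 0) = c.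
Proof.
case/lastP: s => [|s x] // Hu _.
rewrite big_rcons last_rcons eqxx /=.
move: Hu; rewrite rcons_uniq => /andP[Hx _].
rewrite big_seq big1 ?add0n // => e He.
rewrite last_rcons; case: eqP => // Ee; by rewrite -Ee He in Hx.
Qed.

Lemma sum_k_minus (k : nat) : (\sum_(i < k) (k - i)).*2 = k * k.+1.
Proof.
elim: k => [|k IH]; first by rewrite big_ord0.
rewrite big_ord_recl /= subn0.
under eq_bigr => i _ do rewrite /bump /= add1n subSS.
rewrite doubleD IH; lia.
Qed.

Arguments find_block {E D i e}.
Arguments sum_index {E s}.
Arguments sum_last {E s}.

Lemma sum_flat (E : eqType) (D : seq (seq E)) (F : E -> nat) :
  \sum_(e <- flatten D) F e = \sum_(i < size D) \sum_(e <- nth [::] D i) F e.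
Proof.
have -> : flatten D = flatten (mkseq (nth [::] D) (size D)) by rewrite mkseq_nth.
rewrite big_flatten /= big_map -(big_mkord xpredT (fun j => \sum_(e <- nth [::] D j) F e)) /index_iota subn0 //.
Qed.

Local Open Scope ring_scope.

Theorem theorem7 (V E : finType) (L : eqType)
  (src tgt : E -> V) (lab : E -> L) (prec : rel E)
  (D : seq (seq E)) (p : E -> rat) :
  strict_partial_order prec ->
  tc_decomposition src tgt prec D ->
  (forall e : E, p e = ((num_labels lab)%:R)^-1) ->
  expected_joins p D =
    ((num_labels lab)%:R)^-1 *
      ((#|E|%:R - 1) + (size D)%:R / 2 * ((size D)%:R - 1)).
Proof.
move=> _ [Hall Hperm _] Hp.
rewrite /expected_joins; under eq_bigr => e _ do rewrite Hp.
rewrite -big_distrr /=.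
have HenumE : (\sum_(e : E) joins_of_edge D e = \sum_(e <- flatten D) joins_of_edge D e)%N.
  rewrite (perm_big _ Hperm) big_enum /=; apply: eq_bigl => x; by rewrite inE.
have Hcard : #|E| = (\sum_(e <- flatten D) 1)%N.
  by rewrite sum1_size (perm_size Hperm) cardE.
have Hu : uniq (flatten D) by rewrite (perm_uniq Hperm) enum_uniq.
case Hk: (size D) => [|k'].
  move/size0nil: Hk => HD; subst D.
  have HE : enum E = [::] by apply/perm_nilP; rewrite perm_sym.
  by rewrite /num_labels HE /= invr0 !mul0r.
set k := k'.+1.
set g := fun i : nat => if i == 0%N then k.-1 else (k - i)%N.
have Hblk : forall i : 'I_(size D), nth [::] D i != [::] /\ uniq (nth [::] D i).
  move=> i; have /(allP Hall) : nth [::] D i \in D by apply: mem_nth.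
  by case/and4P.
have HN : (\sum_(e : E) joins_of_edge D e =
           \sum_(i < size D) ((size (nth [::] D i)).-1 + g i))%N.
  rewrite HenumE sum_flat; apply: eq_bigr => i _.
  have [Hne Hui] := Hblk i.
  rewrite -(sum_index Hui Hne) -(sum_last (g i) Hui Hne) -big_split /=.
  apply: eq_big_seq => e He.
  by rewrite /joins_of_edge (find_block Hu (ltn_ord i) He) /g /k -Hk.
have HE : (#|E| = \sum_(i < size D) size (nth [::] D i))%N.
  by rewrite Hcard sum_flat; apply: eq_bigr => i _; rewrite sum1_size.
have HE2 : (#|E| = \sum_(i < size D) (size (nth [::] D i)).-1 + size D)%N.
  have H1 : (\sum_(i < size D) 1 = size D)%N by rewrite sum_nat_const card_ord muln1.
  rewrite HE -[X in (_ + X)%N]H1 -big_split /=.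
  apply: eq_bigr => i _; rewrite addn1 prednK //.
  have [Hne _] := Hblk i.
  by rewrite lt0n size_eq0.
have HG : (\sum_(i < size D) g i + 1 = \sum_(i < k) (k - i))%N.
  rewrite Hk !big_ord_recl /= /g /= subn0.
  under eq_bigr => i _ do rewrite /bump /= add1n.
  rewrite /k /=; lia.
have HT := sum_k_minus k.
set T := (\sum_(i < k) (k - i))%N in HG HT.
set S := (\sum_(i < size D) (size (nth [::] D i)).-1)%N in HE2.
set G := (\sum_(i < size D) g i)%N in HG.
rewrite -natr_sum HN big_split /= -/S -/G; congr (_ * _).
have HE2r : (#|E|%:R : rat) = S%:R + k%:R by rewrite HE2 natrD Hk.
have HGr : (G%:R : rat) = T%:R - 1 by rewrite -HG natrD addrK.
have HTr : (T%:R : rat) = k%:R * (k%:R + 1) / 2.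
  have H := congr1 (fun n : nat => (n%:R : rat)) HT.
  rewrite /= -muln2 !natrM -(natr1 k) in H.
  by rewrite -H mulfK.
rewrite natrD HE2r HGr HTr.
by field.
Qed.
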